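(* Let $S=\begin{pmatrix}A&B\\C&D\end{pmatrix}\in\mathrm{Sp}(d,\mathbb R)$. Then $\mathbb R^d=R(B)\oplus A(\ker(B))$.
   Context: $\mathrm{Sp}(d,\mathbb R)$ is the group of real $2d\times 2d$ matrices $S$ with $S^TJS=J$, $J=\begin{pmatrix}0_d&I_d\\-I_d&0_d\end{pmatrix}$, written in $d\times d$ blocks $A,B,C,D$. $R(B)$ is the range and $\ker(B)$ the kernel of $B$; $\oplus$ denotes a (not necessarily orthogonal) direct sum. *)

(* Defs.v *)
From HB Require Import structures.
From mathcomp Require Import all_boot all_order all_algebra.
Set Implicit Arguments. Unset Strict Implicit. Unset Printing Implicit Defensive.
Import Order.TTheory GRing.Theory Num.Theory.
Local Open Scope ring_scope.

Definition symJ (R : nzRingType) (d : nat) : 'M[R]_(d + d) :=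
  block_mx 0 1%:M (- 1%:M) 0.

Definition symplectic (R : nzRingType) (d : nat) (S : 'M[R]_(d + d)) : Prop :=
  S^T *m symJ R d *m S = symJ R d.

Definition range_mx (R : nzRingType) (d : nat) (M : 'M[R]_d) (v : 'cV[R]_d) : Prop :=
  exists x : 'cV[R]_d, v = M *m x.
Definition ker_mx (R : nzRingType) (d : nat) (M : 'M[R]_d) (x : 'cV[R]_d) : Prop :=
  M *m x = 0.
Definition image_mx (R : nzRingType) (d : nat) (M : 'M[R]_d) (U : 'cV[R]_d -> Prop)
  (v : 'cV[R]_d) : Prop := exists x, U x /\ v = M *m x.

Definition direct_sum_whole (R : nzRingType) (d : nat) (U V : 'cV[R]_d -> Prop) : Prop :=
  (forall v : 'cV[R]_d, exists u w, U u /\ V w /\ v = u + w) /\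
  (forall v : 'cV[R]_d, U v -> V v -> v = 0).

(* Main.v *)
Require Import Defs.
From HB Require Import structures.
From mathcomp Require Import all_boot all_order all_algebra.
Import Order.TTheory GRing.Theory Num.Theory.
Local Open Scope ring_scope.

Lemma sympl_rel (R : realFieldType) (d : nat) (S : 'M[R]_(d + d)) :
  symplectic S ->
  (ulsubmx S)^T *m drsubmx S - (dlsubmx S)^T *m ursubmx S = 1%:M /\
  (ursubmx S)^T *m drsubmx S = (drsubmx S)^T *m ursubmx S.
Proof.
rewrite /symplectic /symJ.
set A := ulsubmx S; set B := ursubmx S; set C := dlsubmx S; set D := drsubmx S.
have -> : S = block_mx A B C D by rewrite submxK.
rewrite tr_block_mx !mulmx_block.
move/eq_block_mx => [_ H1 _ H2].
move: H1 H2; rewrite ?mulmx0 ?mul0mx ?mulmx1 ?mulmxN ?mulNmx ?mulmx1 ?add0r ?addr0 ?mulmx_block ?mul1mx ?mul0mx ?mulmx0 ?mulmx1 ?add0r ?addr0 ?mulNmx ?mulmxN.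
idtac.
move=> H1 H2. split.
  by rewrite -H1 addrC.
by apply/eqP; rewrite -subr_eq0 addrC; apply/eqP.
Qed.

Lemma cV_self0 (R : realFieldType) (d : nat) (x : 'cV[R]_d) : x^T *m x = 0 -> x = 0.
Proof.
move/matrixP => /(_ 0 0); rewrite !mxE => H.
apply/matrixP => i j; rewrite (ord1 j) mxE.
have H' : \sum_k x k 0 * x k 0 = 0.
  by move: H; under eq_bigr => k _ do rewrite mxE.
have := @psumr_eq0P R _ xpredT (fun k => x k 0 * x k 0) (fun k _ => sqr_ge0 (x k 0)) H' i isT.
by move/eqP; rewrite mulf_eq0 orbb => /eqP.
Qed.

Lemma core (R : realFieldType) (d : nat) (A B C D : 'M[R]_d) (x y : 'cV[R]_d) :
  A^T *m D - C^T *m B = 1%:M -> B^T *m D = D^T *m B ->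
  B *m x = 0 -> A *m x = B *m y -> x = 0.
Proof.
move=> H1 H2 Hx Hy.
have H1' : D^T *m A - B^T *m C = 1%:M.
  by rewrite -[1%:M]trmx1 -H1 linearB /= !trmx_mul !trmxK.
have Ex : x = B^T *m (D *m y - C *m x).
  rewrite -[x in LHS]mul1mx -H1' mulmxBl mulmxBr !mulmxA -[D^T *m A *m x]mulmxA Hy.
  by rewrite mulmxA -H2.
apply: cV_self0.
by rewrite {2}Ex mulmxA -trmx_mul Hx trmx0 mul0mx.
Qed.

Lemma core_row (R : realFieldType) (d : nat) (A B C D : 'M[R]_d) (u v : 'rV[R]_d) :
  A^T *m D - C^T *m B = 1%:M -> B^T *m D = D^T *m B ->
  u *m B^T = 0 -> u *m A^T = v *m B^T -> u = 0.
Proof.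
move=> H1 H2 Hu Hv.
have E1 : B *m u^T = 0 by apply: trmx_inj; rewrite trmx_mul trmxK Hu trmx0.
have E2 : A *m u^T = B *m v^T.
  by apply: trmx_inj; rewrite !trmx_mul !trmxK Hv.
have := @core _ _ A B C D u^T v^T H1 H2 E1 E2.
by move/eqP; rewrite -trmx0 (inj_eq trmx_inj) => /eqP.
Qed.

Theorem lemma3p4 (R : realFieldType) (d : nat) (S : 'M[R]_(d + d)) :
  symplectic S ->
  let A := ulsubmx S in
  let B := ursubmx S in
  direct_sum_whole (range_mx B) (image_mx A (ker_mx B)).
Proof.
move=> HS A B.
have [H1 H2] := @sympl_rel _ _ _ HS.
set C := dlsubmx S in H1; set D := drsubmx S in H1 H2.
split; last first.
  move=> v [y ->] [x [Hx Hy]].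
  by rewrite Hy (@core _ _ A B C D _ _ H1 H2 Hx (esym Hy)) mulmx0.
set K := kermx B^T.
have I1 : (B^T :&: K *m A^T)%MS = 0.
  apply/eqP/rowV0P => w; rewrite sub_capmx => /andP[/submxP[y ->] /submxP[z Hz]].
  have Hu : z *m K *m B^T = 0 by apply/sub_kermxP; rewrite submxMl.
  have := @core_row _ _ A B C D _ y H1 H2 Hu; rewrite -mulmxA -Hz => /(_ erefl) Hz0.
  by rewrite Hz mulmxA Hz0 mul0mx.
have I2 : (K :&: kermx A^T)%MS = 0.
  apply/eqP/rowV0P => w; rewrite sub_capmx => /andP[/sub_kermxP Hw /sub_kermxP Hw'].
  by apply: (@core_row _ _ A B C D _ 0 H1 H2 Hw); rewrite Hw' mul0mx.
have Hfull : row_full (B^T + K *m A^T)%MS.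
  rewrite -col_leq_rank mxrank_disjoint_sum // .
  have := mxrank_mul_ker K A^T; rewrite I2 mxrank0 addn0 => ->.
  by rewrite mxrank_ker subnKC // rank_leq_col.
move=> v.
have /sub_addsmxP [[u1 u2] /= Hv] := submx_full v^T Hfull.
exists (B *m u1^T), (A *m (u2 *m K)^T); split; first by exists u1^T.
split.
  exists (u2 *m K)^T; split => //.
  rewrite /ker_mx -[B *m _]trmxK trmx_mul trmxK.
  have -> : u2 *m K *m B^T = 0 by apply/sub_kermxP; rewrite submxMl.
  by rewrite trmx0.
apply: trmx_inj; rewrite linearD /= !trmx_mul !trmxK Hv mulmxA.
done.
Qed.
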